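(* Let $\mathcal{C}$ be a clutter and let $A$ be the $n\times s$ matrix with columns $v_1,\ldots,v_s$. Then $$I(X)=\big(\{t^{a^+}-t^{a^-}: a\in\mathbb{Z}^s,\ Aa^+\equiv Aa^-\ (\mathrm{mod}\ q-1),\ |a^+|=|a^-|\}\big),$$ where $a^+,a^-\in\mathbb{N}^s$ are the positive and negative parts of $a$ ($a=a^+-a^-$, disjoint supports), the congruence is entrywise, and $|b|=b_1+\cdots+b_s$.
   Context: Let $K=\mathbb{F}_q$ be a finite field with $q\neq 2$ elements. A clutter $\mathcal{C}$ with vertex set $\{y_1,\ldots,y_n\}$ is a family of subsets (edges) of this set such that no edge is contained in another; let its edges be $f_1,\ldots,f_s$ ($s\geq 2$) with characteristic vectors $v_i=\sum_{y_j\in f_i}e_j\in\{0,1\}^n$. For $x\in K^n$ write $x^{v_i}=\prod_j x_j^{v_{ij}}$. Let $X=\{[(x^{v_1},\ldots,x^{v_s})]\in\mathbb{P}^{s-1}: x\in (K^* )^n\}$, let $S=K[t_1,\ldots,t_s]$ with the standard grading, and let $I(X)$ be the ideal of $S$ generated by the homogeneous polynomials vanishing on $X$. *)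

(* Defs.v *)
(* No multivariate polynomial library is installed, so we
   define a minimal representation of K[t_1..t_s]: a polynomial is a finite
   list of terms (coefficient, exponent vector); two lists denote the same
   polynomial iff they have the same coefficient function [mcoef]. *)
From HB Require Import structures.
From mathcomp Require Import all_boot all_order all_algebra all_field.
Set Implicit Arguments. Unset Strict Implicit. Unset Printing Implicit Defensive.
Import Order.TTheory GRing.Theory Num.Theory.
Local Open Scope ring_scope.

Definition monom (s : nat) := {ffun 'I_s -> nat}.

Definition mpoly (R : nzRingType) (s : nat) := seq (R * monom s).

Section MPoly.
Variables (R : comNzRingType) (s : nat).

Definition mcoef (p : mpoly R s) (m : monom s) : R :=
  \sum_(u <- p | u.2 == m) u.1.

Definition meq (p q : mpoly R s) : Prop := forall m, mcoef p m = mcoef q m.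

Definition madd (p q : mpoly R s) : mpoly R s := p ++ q.

Definition mmul (p q : mpoly R s) : mpoly R s :=
  [seq ((u.1 * w.1)%R, [ffun i => (u.2 i + w.2 i)%N] : monom s)
  | u : R * monom s <- p, w : R * monom s <- q].

Definition mdeg (m : monom s) : nat := (\sum_i m i)%N.

Definition meval (p : mpoly R s) (t : 'I_s -> R) : R :=
  \sum_(u <- p) u.1 * \prod_i t i ^+ u.2 i.

Definition mhomog (p : mpoly R s) : Prop :=
  exists d, forall m, mcoef p m != 0 -> mdeg m = d.

Definition mmonom (m : monom s) : mpoly R s := [:: (1, m)].

Definition mbinom (b c : monom s) : mpoly R s := [:: (1, b); (-1, c)].

Definition in_ideal (G : mpoly R s -> Prop) (f : mpoly R s) : Prop :=
  exists l : seq (mpoly R s * mpoly R s),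
    (forall u, u \in l -> G u.2) /\
    meq f (foldr (fun u acc => madd (mmul u.1 u.2) acc) [::] l).

End MPoly.

Definition is_clutter (n s : nat) (E : 'I_s -> {set 'I_n}) : Prop :=
  forall i j : 'I_s, i != j -> ~~ (E i \subset E j).

Definition incidence (n s : nat) (E : 'I_s -> {set 'I_n}) : 'M[nat]_(n, s) :=
  \matrix_(j < n, i < s) nat_of_bool (j \in E i).

Definition xpow (K : fieldType) (n s : nat) (E : 'I_s -> {set 'I_n})
  (x : 'I_n -> K) (i : 'I_s) : K := \prod_(j in E i) x j.

(* I(X): generated by the homogeneous polynomials vanishing on
   X = {[(x^{v_1},...,x^{v_s})] : x in (K^* )^n}. *)
Definition IX_gen (K : fieldType) (n s : nat) (E : 'I_s -> {set 'I_n})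
  (F : mpoly K s) : Prop :=
  mhomog F /\
  forall x : 'I_n -> K, (forall j, x j != 0) -> meval F (xpow E x) = 0.

Definition vanishing_ideal (K : fieldType) (n s : nat) (E : 'I_s -> {set 'I_n})
  : mpoly K s -> Prop := in_ideal (IX_gen E).

Definition posp (s : nat) (a : 'I_s -> int) : monom s :=
  [ffun i => if (0 <= a i)%R then absz (a i) else 0%N].
Definition negp (s : nat) (a : 'I_s -> int) : monom s :=
  [ffun i => if (0 <= a i)%R then 0%N else absz (a i)].

Definition matvec (n s : nat) (A : 'M[nat]_(n, s)) (b : monom s) (j : 'I_n) : nat :=
  (\sum_i A j i * b i)%N.

Definition binom_gen (K : finFieldType) (n s : nat) (E : 'I_s -> {set 'I_n})
  (g : mpoly K s) : Prop :=
  exists a : 'I_s -> int,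
    (forall j : 'I_n, matvec (incidence E) (posp a) j
                      = matvec (incidence E) (negp a) j %[mod #|K|.-1]) /\
    mdeg (posp a) = mdeg (negp a) /\
    g = mbinom K (posp a) (negp a).

(* Main.v *)
Require Import Defs.
From HB Require Import structures.
From mathcomp Require Import all_boot all_order all_algebra all_field.
Set Implicit Arguments. Unset Strict Implicit. Unset Printing Implicit Defensive.
Import Order.TTheory GRing.Theory Num.Theory.
Local Open Scope ring_scope.

Lemma card_natr0 (K : finFieldType) : (#|K|%:R : K) = 0.
Proof.
have H : \sum_(y : K) y = \sum_(y : K) (1 + y).
  by rewrite (reindex_inj (addrI (1:K))).
move/eqP: H; rewrite big_split /= sumr_const -subr_eq subrr => /eqP.
by move=> ->.
Qed.

Lemma q1_gt0 (K : finFieldType) : (0 < #|K|.-1)%N.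
Proof.
rewrite -(cardC1 (0:K)); apply/card_gt0P; exists 1; by rewrite !inE oner_neq0.
Qed.

Lemma cardK_gt0 (K : finFieldType) : (0 < #|K|)%N.
Proof. by move: (q1_gt0 K); case: #|K|. Qed.

Lemma q1_natr (K : finFieldType) : ((#|K|.-1)%:R : K) = -1.
Proof.
have := card_natr0 K; rewrite -{1}(prednK (cardK_gt0 K)) -natr1 => /eqP.
by rewrite addr_eq0 => /eqP.
Qed.

Lemma expf_q1 (K : finFieldType) (x : K) : x != 0 -> x ^+ #|K|.-1 = 1.
Proof.
move=> xn0; apply: (mulfI xn0); rewrite mulr1 -exprS prednK ?expf_card //.
exact: cardK_gt0.
Qed.

Lemma expf_mod (K : finFieldType) (x : K) k :
  x != 0 -> x ^+ k = x ^+ (k %% #|K|.-1).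
Proof.
move=> xn0; rewrite {1}(divn_eq k #|K|.-1) exprD mulnC exprM expf_q1 //.
by rewrite expr1n mul1r.
Qed.

Definition Ssum (K : finFieldType) k := \sum_(y : K | y != 0) y ^+ k.

Lemma exists_bad (K : finFieldType) k : (k %% #|K|.-1 != 0)%N ->
  exists c : K, c != 0 /\ c ^+ k != 1.
Proof.
move=> hk.
case: (boolP [exists c : K, (c != 0) && (c ^+ k != 1)]).
  by move/existsP=> [c /andP[h1 h2]]; exists c.
move=> /existsPn H; exfalso.
set k' := (k %% #|K|.-1)%N.
have k'gt0 : (0 < k')%N by rewrite lt0n.
have k'lt : (k' < #|K|.-1)%N by rewrite ltn_pmod // q1_gt0.
have p0 : ('X^k' - 1 : {poly K}) != 0.
  by rewrite -size_poly_eq0 -polyC1 size_XnsubC.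
have Hall : all (root ('X^k' - 1%:P)) (enum (predC1 (0:K))).
  apply/allP=> y; rewrite mem_enum !inE => yn0.
  have := H y; rewrite yn0 /= negbK => /eqP hy.
  by rewrite /root !hornerE -expf_mod // hy subrr.
have := max_poly_roots p0 (rs := enum (predC1 (0:K))).
rewrite enum_uniq -cardE cardC1 -polyC1 size_XnsubC // ltnS leqNgt k'lt.
by move/(_ Hall isT).
Qed.

Lemma Ssum_val (K : finFieldType) k :
  Ssum K k = if (k %% #|K|.-1 == 0)%N then -1 else 0.
Proof.
case: ifP => hk.
  rewrite /Ssum (eq_bigr (fun _ => 1)); last first.
    by move=> y yn0; rewrite expf_mod // (eqP hk) expr0.
  by rewrite (eq_bigl (fun y => y \in predC1 0)) // sumr_const cardC1 q1_natr.
have [c [cn0 ck]] := exists_bad (negbT hk).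
have H : Ssum K k = c ^+ k * Ssum K k.
  rewrite /Ssum mulr_sumr (reindex_inj (mulfI cn0)).
  apply: eq_big => y; first by rewrite mulf_eq0 negb_or cn0.
  by rewrite exprMn.
have : (c ^+ k - 1) * Ssum K k = 0 by rewrite mulrBl mul1r -H subrr.
by move/eqP; rewrite mulf_eq0 subr_eq0 (negbTE ck) /= => /eqP.
Qed.
Lemma transfer (R : comNzRingType) s (P : mpoly R s) (Rp : pred (monom s)) :
  (forall m, Rp m -> mcoef P m = 0) -> \sum_(u <- P | Rp u.2) u.1 = 0.
Proof.
move=> H.
rewrite (_ : \sum_(u <- P | Rp u.2) u.1 =
   \sum_(m <- undup (map snd P) | Rp m) mcoef P m).
  by rewrite big1_seq // => m /andP[/H].
rewrite /mcoef; symmetry.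
transitivity (\sum_(m <- undup [seq u.2 | u <- P])
   \sum_(u <- P) (if Rp m && (u.2 == m) then u.1 else 0)).
  rewrite big_mkcond; apply: eq_bigr => m _; rewrite big_mkcond /=.
  case: (Rp m) => //=; by rewrite big1.
rewrite exchange_big /= [RHS]big_mkcond [LHS]big_seq [RHS]big_seq.
apply: eq_bigr => u uP.
rewrite (eq_bigr (fun m => if m == u.2 then (if Rp u.2 then u.1 else 0) else 0)); last first.
  by move=> m _; case: (eqVneq m u.2) => [->|ne]; rewrite ?andbT ?andbF.
rewrite -big_mkcond big_const_seq /=.
rewrite count_uniq_mem ?undup_uniq // mem_undup map_f //.
by rewrite /= addr0.
Qed.
Definition maddm s (a b : monom s) : monom s := [ffun i => (a i + b i)%N].

Lemma mdegD s (a b : monom s) : mdeg (maddm a b) = (mdeg a + mdeg b)%N.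
Proof. by rewrite /mdeg -big_split; apply: eq_bigr => i _; rewrite ffunE. Qed.

Lemma matvecD n s (A : 'M[nat]_(n, s)) (a b : monom s) j :
  matvec A (maddm a b) j = (matvec A a j + matvec A b j)%N.
Proof. by rewrite /matvec -big_split; apply: eq_bigr => i _; rewrite ffunE mulnDr. Qed.

Definition cls (d n s : nat) (A : 'M[nat]_(n, s)) (m m0 : monom s) : bool :=
  [forall j, matvec A m j == matvec A m0 j %[mod d]].

Definition rel (d n s : nat) (A : 'M[nat]_(n, s)) (m m0 : monom s) : bool :=
  (mdeg m == mdeg m0) && cls d A m m0.

Lemma rel_refl d n s (A : 'M[nat]_(n, s)) m : rel d A m m.
Proof. by rewrite /rel eqxx; apply/forallP. Qed.

Lemma rel_sym d n s (A : 'M[nat]_(n, s)) m m' : rel d A m m' = rel d A m' m.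
Proof.
rewrite /rel eq_sym /cls; congr (_ && _); apply: eq_forallb => j; exact: eq_sym.
Qed.

Lemma rel_trans d n s (A : 'M[nat]_(n, s)) m1 m2 m3 :
  rel d A m1 m2 -> rel d A m2 m3 -> rel d A m1 m3.
Proof.
move=> /andP[/eqP h1 /forallP c1] /andP[/eqP h2 /forallP c2].
rewrite /rel h1 h2 eqxx /=; apply/forallP => j.
by rewrite (eqP (c1 j)) (eqP (c2 j)).
Qed.

Lemma rel_shift d n s (A : 'M[nat]_(n, s)) u w w' m0 :
  rel d A (maddm u w') m0 -> rel d A (maddm u w) m0 = rel d A w w'.
Proof.
move=> /andP[/eqP h1 /forallP c1].
rewrite /rel -h1 !mdegD eqn_add2l; congr (_ && _).
apply: eq_forallb => j; rewrite -(eqP (c1 j)) !matvecD.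
exact: eqn_modDl.
Qed.

Definition balanced (R : comNzRingType) d n s (A : 'M[nat]_(n, s))
  (P : mpoly R s) := forall m0, \sum_(u <- P | rel d A u.2 m0) u.1 = 0.

Lemma balanced_cat (R : comNzRingType) d n s (A : 'M[nat]_(n, s)) (P Q : mpoly R s) :
  balanced d A P -> balanced d A Q -> balanced d A (P ++ Q).
Proof. by move=> hP hQ m0; rewrite big_cat /= hP hQ addr0. Qed.

Lemma balanced_mmul (R : comNzRingType) d n s (A : 'M[nat]_(n, s)) (h P : mpoly R s) :
  balanced d A P -> balanced d A (mmul h P).
Proof.
move=> hP m0; rewrite /mmul big_mkcond big_allpairs_dep /=.
rewrite big1 // => u _.
rewrite -big_mkcond /= -mulr_sumr.
case: (boolP (has (fun w : R * monom s => rel d A (maddm u.2 w.2) m0) P)).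
  move=> /hasP[w' _ hw'].
  rewrite (eq_bigl (fun w : R * monom s => rel d A w.2 w'.2)).
    by rewrite hP mulr0.
  by move=> w /=; have := rel_shift w.2 hw'.
by move=> hn; rewrite big_hasC ?mulr0.
Qed.

Lemma xpow_prod (K : fieldType) n s (E : 'I_s -> {set 'I_n}) (x : 'I_n -> K) (b : monom s) :
  \prod_i xpow E x i ^+ b i = \prod_j x j ^+ matvec (incidence E) b j.
Proof.
rewrite /matvec.
under [RHS]eq_bigr => j _ do rewrite expr_sum.
rewrite exchange_big /=; apply: eq_bigr => i _.
rewrite /xpow -prodrXl big_mkcond /=; apply: eq_bigr => j _.
by rewrite mxE; case: (j \in E i) => /=; rewrite ?mul1n ?mul0n ?expr0.
Qed.

Lemma class_sum (K : finFieldType) n s (E : 'I_s -> {set 'I_n}) (F : mpoly K s) m0 :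
  (forall x : 'I_n -> K, (forall j, x j != 0) -> meval F (xpow E x) = 0) ->
  \sum_(u <- F | cls #|K|.-1 (incidence E) u.2 m0) u.1 = 0.
Proof.
move=> hv.
set A := incidence E. set e0 := matvec A m0. set d := #|K|.-1.
pose w (x : {ffun 'I_n -> K}) := \prod_j x j ^+ (d.-1 * e0 j).
have H0 : \sum_(x : {ffun 'I_n -> K} | [forall j, x j != 0])
     meval F (xpow E x) * w x = 0.
  by apply: big1 => x /forallP hx; rewrite hv // mul0r.
have key : forall b : monom s,
  \sum_(x : {ffun 'I_n -> K} | [forall j, x j != 0])
     (\prod_i xpow E x i ^+ b i) * w x
   = if cls d A b m0 then (-1) ^+ n else 0.
  move=> b.
  transitivity (\sum_(x : {ffun 'I_n -> K}) \prod_j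
     (if x j != 0 then x j ^+ (matvec A b j + d.-1 * e0 j) else 0)).
    rewrite big_mkcond; apply: eq_bigr => x _.
    case: (boolP [forall j, x j != 0]) => [/forallP hx|].
      rewrite xpow_prod /w -big_split /=; apply: eq_bigr => j _.
      by rewrite hx exprD.
    by move=> /forallPn [j0 hj0]; rewrite (bigD1 j0) //= (negbTE hj0) mul0r.
  rewrite -(@bigA_distr_bigA K 0 1 *%R +%R 'I_n K (fun j (y : K) => if y != 0 then y ^+ (matvec A b j + d.-1 * e0 j) else 0)) /=.
  transitivity (\prod_j Ssum K (matvec A b j + d.-1 * e0 j)).
    by apply: eq_bigr => j _; rewrite /Ssum [RHS]big_mkcond.
  rewrite (eq_bigr (fun j => if (matvec A b j == e0 j %[mod d]) then -1 else 0)); last first.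
    move=> j _; rewrite Ssum_val; congr (if _ then _ else _).
    rewrite -(eqn_modDr (d.-1 * e0 j)) -mulSn prednK ?q1_gt0 //.
    by rewrite -/d modnMr.
  case: (boolP (cls d A b m0)) => [/forallP hc | /forallPn [j0 hj0]].
    by rewrite (eq_bigr (fun _ => -1)) ?prodr_const ?card_ord // => j _; rewrite hc.
  by rewrite (bigD1 j0) //= (negbTE hj0) mul0r.
have : \sum_(u <- F | cls d A u.2 m0) u.1 * (-1) ^+ n = 0.
  rewrite -[RHS]H0 /meval.
  under [RHS]eq_bigr => x _ do rewrite mulr_suml.
  rewrite [RHS]exchange_big /= big_mkcond /=; apply: eq_bigr => u _.
  rewrite (eq_bigr (fun x : {ffun 'I_n -> K} => u.1 * ((\prod_i xpow E x i ^+ u.2 i) * w x))); last first.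
    by move=> x _; rewrite mulrA.
  by rewrite -mulr_sumr key; case: ifP; rewrite ?mulr0.
rewrite -mulr_suml => /eqP; rewrite mulf_eq0 expf_eq0 oppr_eq0 oner_eq0 andbF orbF.
by move/eqP.
Qed.

Lemma IXgen_bal (K : finFieldType) n s (E : 'I_s -> {set 'I_n}) (F : mpoly K s) :
  IX_gen E F -> balanced #|K|.-1 (incidence E) F.
Proof.
move=> [[dg hd] hv] m0.
have zero_off : forall Q : pred (monom s), (forall m, Q m -> mdeg m != dg) ->
    \sum_(u <- F | Q u.2) u.1 = 0.
  move=> Q hQ; apply: transfer => m /hQ hm; apply/eqP; apply: contraNT hm.
  by move=> /hd ->; rewrite eqxx.
case: (eqVneq (mdeg m0) dg) => hm0.
  have := class_sum m0 hv.
  rewrite (bigID (fun u : K * monom s => mdeg u.2 == mdeg m0)) /=.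
  rewrite (zero_off (fun m => cls #|K|.-1 (incidence E) m m0 && (mdeg m != mdeg m0))).
    by rewrite addr0 (eq_bigl (fun u : K * monom s => rel #|K|.-1 (incidence E) u.2 m0)) // => u; rewrite /rel andbC.
  by move=> m /andP[_]; rewrite hm0.
apply: (zero_off (fun m => rel #|K|.-1 (incidence E) m m0)).
by move=> m /andP[/eqP -> _].
Qed.

Lemma mcoef2 (R : comNzRingType) s (a c : R) (b e m : monom s) :
  mcoef [:: (a, b); (c, e)] m = (if b == m then a else 0) + (if e == m then c else 0).
Proof.
rewrite /mcoef !big_cons big_nil /=.
by case: (b == m); case: (e == m); rewrite ?addr0 ?add0r.
Qed.

Lemma mcoef_cat (R : comNzRingType) s (p q : mpoly R s) m :
  mcoef (p ++ q) m = mcoef p m + mcoef q m.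
Proof. by rewrite /mcoef big_cat. Qed.

Definition mfold (R : comNzRingType) s (l : seq (mpoly R s * mpoly R s)) : mpoly R s :=
  foldr (fun u acc => madd (mmul u.1 u.2) acc) [::] l.

Lemma mcoef_fold (R : comNzRingType) s (l : seq (mpoly R s * mpoly R s)) m :
  mcoef (mfold l) m = \sum_(u <- l) mcoef (mmul u.1 u.2) m.
Proof.
elim: l => [|u l IH]; first by rewrite big_nil /mcoef big_nil.
by rewrite big_cons /= /madd mcoef_cat IH.
Qed.

Lemma binom_IX (K : finFieldType) n s (E : 'I_s -> {set 'I_n}) (g : mpoly K s) :
  binom_gen E g -> IX_gen E g.
Proof.
move=> [a [hc [hd ->]]]; split.
  exists (mdeg (posp a)) => m; rewrite /mbinom mcoef2.
  case: (eqVneq (posp a) m) => [<- //|_].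
  case: (eqVneq (negp a) m) => [<- _|_]; [by rewrite hd | by rewrite addr0 eqxx].
move=> x hx; rewrite /meval /mbinom !big_cons big_nil /= !xpow_prod.
rewrite (eq_bigr (fun j => x j ^+ matvec (incidence E) (negp a) j)).
  by rewrite mul1r mulN1r addr0 subrr.
by move=> j _; rewrite (expf_mod _ (hx j)) hc -expf_mod.
Qed.

Definition gmin s (b c : monom s) : monom s := [ffun i => minn (b i) (c i)].
Definition adiff s (b c : monom s) : 'I_s -> int := fun i => (b i)%:Z - (c i)%:Z.

Lemma posp_adiff s (b c : monom s) : maddm (gmin b c) (posp (adiff b c)) = b.
Proof.
apply/ffunP => i; rewrite !ffunE /adiff.
case: (leqP (c i) (b i)) => h; rewrite subr_ge0 lez_nat.
  by rewrite h distnEl // subnKC.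
by rewrite leqNgt h /= addn0.
Qed.

Lemma negp_adiff s (b c : monom s) : maddm (gmin b c) (negp (adiff b c)) = c.
Proof.
apply/ffunP => i; rewrite !ffunE /adiff.
case: (leqP (c i) (b i)) => h; rewrite subr_ge0 lez_nat.
  by rewrite h addn0.
by rewrite leqNgt h /= distnEr ?subnKC // ltnW.
Qed.

Lemma mmul_single (R : comNzRingType) s (a : R) (g b c : monom s) :
  mmul [:: (a, g)] (mbinom R b c) = [:: (a * 1, maddm g b); (a * -1, maddm g c)].
Proof. by []. Qed.

Lemma bal_ideal (K : finFieldType) n s (E : 'I_s -> {set 'I_n}) (P : mpoly K s) :
  balanced #|K|.-1 (incidence E) P -> in_ideal (binom_gen E) P.
Proof.
move=> hb.
set d := #|K|.-1. set A := incidence E.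
pose x0 : K * monom s := (0, [ffun _ => 0%N]).
pose rp (m : monom s) := (nth x0 P (find (fun w : K * monom s => rel d A w.2 m) P)).2.
have rp_rel : forall u, u \in P -> rel d A (rp u.2) u.2.
  move=> u uP.
  have hh : has (fun w : K * monom s => rel d A w.2 u.2) P.
    by apply/hasP; exists u => //; exact: rel_refl.
  exact: (nth_find x0 hh).
have rp_eq : forall m m', rel d A m m' -> rp m = rp m'.
  move=> m m' hmm; rewrite /rp (eq_find (a2 := fun w : K * monom s => rel d A w.2 m')) //.
  move=> w /=; apply/idP/idP => h; first exact: rel_trans h hmm.
  by apply: rel_trans h _; rewrite rel_sym.
have rp_iff : forall u w, u \in P -> w \in P -> (rp u.2 == rp w.2) = rel d A u.2 w.2.
  move=> u w uP wP; apply/eqP/idP => [h|h]; last exact: rp_eq.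
  apply: (@rel_trans _ _ _ _ _ (rp u.2)); first by rewrite rel_sym; exact: rp_rel.
  by rewrite h; exact: rp_rel.
pose gen (u : K * monom s) : mpoly K s * mpoly K s :=
  ([:: (u.1, gmin u.2 (rp u.2))],
   mbinom K (posp (adiff u.2 (rp u.2))) (negp (adiff u.2 (rp u.2)))).
exists (map gen P); split.
  move=> g /mapP [u uP ->] /=.
  have hr := rp_rel u uP; rewrite rel_sym in hr.
  move: hr => /andP[/eqP hdeg /forallP hcls].
  exists (adiff u.2 (rp u.2)); split; [|split] => //.
    move=> j.
    have h : matvec A (maddm (gmin u.2 (rp u.2)) (posp (adiff u.2 (rp u.2)))) j
           == matvec A (maddm (gmin u.2 (rp u.2)) (negp (adiff u.2 (rp u.2)))) j %[mod d].
      by rewrite posp_adiff negp_adiff; exact: hcls.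
    by move: h; rewrite !matvecD eqn_modDl => /eqP.
  have h : mdeg (maddm (gmin u.2 (rp u.2)) (posp (adiff u.2 (rp u.2))))
         = mdeg (maddm (gmin u.2 (rp u.2)) (negp (adiff u.2 (rp u.2)))).
    by rewrite posp_adiff negp_adiff.
  by move: h; rewrite !mdegD => /eqP; rewrite eqn_add2l => /eqP.
move=> m; rewrite /mfold mcoef_fold big_map.
under eq_bigr => u _ do rewrite /= mmul_single posp_adiff negp_adiff mcoef2.
rewrite big_split /=.
have -> : \sum_(u <- P) (if rp u.2 == m then u.1 * -1 else 0) = 0.
  rewrite -big_mkcond /= -mulr_suml.
  case: (boolP (has (fun u : K * monom s => rp u.2 == m) P)) => [/hasP [w wP /eqP hw]|hn];
    last by rewrite big_hasC // mul0r.
  rewrite big_seq_cond (eq_bigl (fun u : K * monom s => (u \in P) && rel d A u.2 w.2)); last first.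
    by move=> u /=; case uP: (u \in P) => //=; rewrite -hw rp_iff.
  by rewrite -big_seq_cond hb mul0r.
rewrite addr0 /mcoef big_mkcond; apply: eq_bigr => u _; by rewrite mulr1.
Qed.

Theorem proposition4p3 (K : finFieldType) (n s : nat)
  (E : 'I_s -> {set 'I_n}) :
  #|K| != 2 -> (2 <= s)%N -> is_clutter E ->
  forall f : mpoly K s,
    vanishing_ideal E f <-> in_ideal (binom_gen E) f.
Proof.
move=> _ _ _ f; split.
  move=> [l [hl hf]].
  have hb : balanced #|K|.-1 (incidence E) (mfold l).
    elim: l hl {hf} => [|u l IH] hl; first by move=> m0; rewrite big_nil.
    apply: balanced_cat.
      by apply: balanced_mmul; apply: IXgen_bal; apply: hl; exact: mem_head.
    by apply: IH => v vl; apply: hl; rewrite in_cons vl orbT.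
  have [l' [hl' hf']] := bal_ideal hb.
  by exists l'; split => // m; rewrite hf; exact: hf'.
move=> [l [hl hf]]; exists l; split => // u /hl; exact: binom_IX.
Qed.
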